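(* Let $X$ be an irreducible affine algebraic variety over an algebraically closed field $k$ whose coordinate ring $k[X]$ is factorial. Let $W$ be a finite-dimensional vector space over $k$ and $\varphi_1,\dots,\varphi_n,\psi:X\to W$ morphisms of algebraic varieties such that the set $O=\{x\in X\mid \varphi_1(x),\dots,\varphi_n(x)\text{ are linearly independent}\}$ is nonempty, while for each $x\in X$ the $n+1$ vectors $\varphi_1(x),\dots,\varphi_n(x),\psi(x)$ are linearly dependent. Then there exist $p_1,\dots,p_n,p_0\in k[X]$ with $\gcd(p_1,\dots,p_n,p_0)=1$ and $p_0(x)\psi(x)=\sum_{i=1}^n p_i(x)\varphi_i(x)$ for all $x\in X$. Moreover, for functions $h_1,\dots,h_n,h_0\in k[X]$ the equality $h_0(x)\psi(x)=\sum_{i=1}^n h_i(x)\varphi_i(x)$ holds identically on $X$ if and only if there is $g\in k[X]$ with $h_i=gp_i$ for all $i=0,1,\dots,n$. *)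

(* Defs.v *)
From HB Require Import structures.
From mathcomp Require Import all_boot all_order all_algebra.
Set Implicit Arguments. Unset Strict Implicit. Unset Printing Implicit Defensive.
Import Order.TTheory GRing.Theory Num.Theory.
Local Open Scope ring_scope.

Definition rdvd (A : idomainType) (d a : A) : Prop := exists c, a = d * c.

Definition irreducible_elt (A : idomainType) (a : A) : Prop :=
  a != 0 /\ a \isn't a GRing.unit /\
  forall b c : A, a = b * c -> b \is a GRing.unit \/ c \is a GRing.unit.

Definition associated (A : idomainType) (a b : A) : Prop :=
  exists u : A, u \is a GRing.unit /\ a = u * b.

Definition factorial_ring (A : idomainType) : Prop :=
  (forall a : A, a != 0 -> a \isn't a GRing.unit ->
     exists s : seq A, (forall p, p \in s -> irreducible_elt p) /\
                       a = \prod_(p <- s) p) /\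
  (forall s t : seq A,
     (forall p, p \in s -> irreducible_elt p) ->
     (forall p, p \in t -> irreducible_elt p) ->
     associated (\prod_(p <- s) p) (\prod_(p <- t) p) ->
     exists t' : seq A, perm_eq t t' /\ size t' = size s /\
       forall i, (i < size s)%N -> associated (nth 0 s i) (nth 0 t' i)).

Definition fin_gen_alg (k : fieldType) (A : idomainType)
    (iota : {rmorphism k -> A}) : Prop :=
  exists (m : nat) (g : 'I_m -> A),
    forall S : pred A,
      (forall c : k, iota c \in S) -> (forall i, g i \in S) ->
      (forall a b, a \in S -> b \in S -> a + b \in S) ->
      (forall a b, a \in S -> b \in S -> a * b \in S) ->
      forall a, a \in S.

(* Points of the affine variety X with coordinate ring A: k-algebra
   homomorphisms A -> k (Nullstellensatz, k algebraically closed). *)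
Definition is_point (k : fieldType) (A : idomainType)
    (iota : {rmorphism k -> A}) (x : {rmorphism A -> k}) : Prop :=
  forall c : k, x (iota c) = c.

(* Value at x of a morphism X -> W = k^d, given by its coordinate functions. *)
Definition evalv (k : fieldType) (A : idomainType) (d : nat)
    (x : {rmorphism A -> k}) (f : 'rV[A]_d) : 'rV[k]_d := map_mx x f.

(* Main.v *)
Require Import Defs.
From HB Require Import structures.
From mathcomp Require Import all_boot all_order all_algebra.
From Stdlib Require Import ClassicalEpsilon.
From mathcomp Require Import ring zify.
Set Implicit Arguments. Unset Strict Implicit. Unset Printing Implicit Defensive.
Import Order.TTheory GRing.Theory Num.Theory.
Local Open Scope ring_scope.

Definition asb (P : Prop) : bool :=
  if excluded_middle_informative P then true else false.
Lemma asbP (P : Prop) : reflect P (asb P).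
Proof. by rewrite /asb; case: excluded_middle_informative => h; constructor. Qed.

Definition pick_or (T : Type) (d : T) (P : T -> Prop) : T :=
  match excluded_middle_informative (exists t, P t) with
  | left h => proj1_sig (constructive_indefinite_description _ h)
  | right _ => d end.
Lemma pick_orP (T : Type) (d : T) (P : T -> Prop) : (exists t, P t) -> P (pick_or d P).
Proof.
rewrite /pick_or; case: excluded_middle_informative => // h _.
exact: proj2_sig (constructive_indefinite_description _ h).
Qed.

Lemma ex_min_nat (P : nat -> Prop) : (exists n, P n) -> exists n, P n /\ forall m, P m -> (n <= m)%N.
Proof.
move=> h.
have h' : exists n, asb (P n) by case: h => n hn; exists n; apply/asbP.
exists (ex_minn h'); case: ex_minnP => m /asbP Pm hm; split => // j Pj.
by apply: hm; apply/asbP.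
Qed.

Lemma hornerB (R : nzRingType) (p q : {poly R}) x : (p - q).[x] = p.[x] - q.[x].
Proof. by rewrite hornerD hornerN. Qed.
Section NS.
Variables (k : closedFieldType) (A : idomainType) (iota : {rmorphism k -> A}) (G : nat -> A).

Fixpoint inB (j : nat) (a : A) : Prop :=
  match j with
  | 0 => exists c, a = iota c
  | j'.+1 => exists Q : {poly A}, (forall i, inB j' Q`_i) /\ a = Q.[G j']
  end.

Lemma big_closed (P : A -> Prop) (I : Type) (r : seq I) (F : I -> A) :
  P 0 -> (forall a b, P a -> P b -> P (a + b)) -> (forall i, P (F i)) ->
  P (\sum_(i <- r) F i).
Proof.
move=> P0 PD PF; elim: r => [|x r IH]; first by rewrite big_nil.
by rewrite big_cons; apply: PD.
Qed.

Lemma inB_closed j : (forall c, inB j (iota c)) /\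
  (forall a b, inB j a -> inB j b -> inB j (a + b) /\ inB j (a * b)).
Proof.
elim: j => [|j [IHc IHab]] /=.
  split; first by move=> c; exists c.
  by move=> a b [c ->] [d ->]; split; [exists (c + d); rewrite rmorphD | exists (c * d); rewrite rmorphM].
have I0 : inB j 0 by rewrite -(rmorph0 iota); apply: IHc.
split.
  move=> c; exists (iota c)%:P; split; last by rewrite hornerC.
  by move=> i; rewrite coefC; case: eqP.
move=> a b [P [HP ->]] [Q [HQ ->]]; split.
  by exists (P + Q); split; [move=> i; rewrite coefD; apply: (proj1 (IHab _ _ _ _)) | rewrite hornerD].
exists (P * Q); split; last by rewrite hornerM.
move=> i; rewrite coefM; apply: big_closed => //.
  by move=> u v hu hv; apply: (proj1 (IHab _ _ hu hv)).
by move=> l; apply: (proj2 (IHab _ _ _ _)).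
Qed.

Definition inBb j : {pred A} := fun a => asb (inB j a).

Lemma inBbP j a : reflect (inB j a) (a \in inBb j).
Proof. exact: asbP. Qed.

Lemma inBb_subring j : subring_closed (inBb j).
Proof.
have [Ic Iab] := inB_closed j.
split.
- apply/inBbP. idtac.
  rewrite -(rmorph1 iota). apply: Ic.
- move=> a b /inBbP ha /inBbP hb; apply/inBbP.
  have -> : a - b = a + iota (-1) * b by rewrite rmorphN1 mulN1r.
  by apply: (proj1 (Iab _ _ _ _)) => //; apply: (proj2 (Iab _ _ _ _)).
- by move=> a b /inBbP ha /inBbP hb; apply/inBbP; apply: (proj2 (Iab _ _ _ _)).
Qed.

HB.instance Definition _ j := GRing.isSubringClosed.Build A (inBb j) (inBb_subring j).

Lemma inBb_iota j c : iota c \in inBb j.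
Proof. by apply/inBbP; apply: (proj1 (inB_closed j)). Qed.

Lemma inBSP j a : inB j.+1 a <-> exists2 Q : {poly A}, Q \is a polyOver (inBb j) & a = Q.[G j].
Proof.
split.
  by case=> Q [HQ ->]; exists Q => //; apply/polyOverP => i; apply/inBbP; apply: HQ.
by case=> Q /polyOverP HQ ->; exists Q; split => // i; apply/inBbP; apply: HQ.
Qed.

Lemma inB_mono j a : inB j a -> inB j.+1 a.
Proof.
move=> h; apply/inBSP; exists a%:P; last by rewrite hornerC.
by rewrite polyOverC; apply/inBbP.
Qed.

Lemma inB_gen j : inB j.+1 (G j).
Proof.
apply/inBSP; exists 'X; last by rewrite hornerX.
exact: polyOverX.
Qed.


Definition ptj j (y : A -> k) := (forall c, y (iota c) = c) /\
  {in inBb j &, {morph y : u v / u + v}} /\ {in inBb j &, {morph y : u v / u * v}}.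

Section PT.
Variables (j : nat) (y : A -> k) (hy : ptj j y).

Lemma pt_iota c : y (iota c) = c. Proof. by case: hy. Qed.
Lemma pt0 : y 0 = 0. Proof. by rewrite -(rmorph0 iota) pt_iota. Qed.
Lemma ptD a b : a \in inBb j -> b \in inBb j -> y (a + b) = y a + y b.
Proof. by case: hy => _ [h _]; apply: h. Qed.
Lemma ptM a b : a \in inBb j -> b \in inBb j -> y (a * b) = y a * y b.
Proof. by case: hy => _ [_ h]; apply: h. Qed.
Lemma ptN a : a \in inBb j -> y (- a) = - y a.
Proof.
move=> ha; apply/eqP; rewrite -subr_eq0 opprK -ptD ?rpredN //.
by rewrite addNr pt0.
Qed.
Lemma ptsum (I : Type) (r : seq I) (F : I -> A) :
  (forall i, F i \in inBb j) -> y (\sum_(i <- r) F i) = \sum_(i <- r) y (F i).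
Proof.
move=> hF; elim: r => [|x r IH]; first by rewrite !big_nil pt0.
rewrite !big_cons ptD ?IH //; exact: rpred_sum.
Qed.

Lemma ptX a n : a \in inBb j -> y (a ^+ n) = y a ^+ n.
Proof.
move=> ha; elim: n => [|n IH]; first by rewrite !expr0 -(rmorph1 iota) pt_iota.
by rewrite !exprS ptM ?rpredX // IH.
Qed.

Lemma map_coef (P : {poly A}) i : (map_poly y P)`_i = y P`_i.
Proof. exact: coef_map_id0 pt0. Qed.

Lemma mapD (P Q : {poly A}) : P \is a polyOver (inBb j) -> Q \is a polyOver (inBb j) ->
  map_poly y (P + Q) = map_poly y P + map_poly y Q.
Proof.
move=> /polyOverP hP /polyOverP hQ; apply/polyP => i.
by rewrite coefD !map_coef coefD ptD.
Qed.

Lemma mapN (P : {poly A}) : P \is a polyOver (inBb j) -> map_poly y (- P) = - map_poly y P.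
Proof.
move=> /polyOverP hP; apply/polyP => i.
by rewrite coefN !map_coef coefN ptN.
Qed.

Lemma mapB (P Q : {poly A}) : P \is a polyOver (inBb j) -> Q \is a polyOver (inBb j) ->
  map_poly y (P - Q) = map_poly y P - map_poly y Q.
Proof. by move=> hP hQ; rewrite mapD ?rpredN // mapN. Qed.

Lemma mapM (P Q : {poly A}) : P \is a polyOver (inBb j) -> Q \is a polyOver (inBb j) ->
  map_poly y (P * Q) = map_poly y P * map_poly y Q.
Proof.
move=> /polyOverP hP /polyOverP hQ; apply/polyP => i.
rewrite map_coef !coefM ptsum; last by move=> l; rewrite rpredM.
by apply: eq_bigr => l _; rewrite ptM // !map_coef.
Qed.

Lemma mapC (c : A) : map_poly y c%:P = (y c)%:P.
Proof. by apply/polyP => i; rewrite map_coef !coefC; case: eqP; rewrite ?pt0. Qed.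

Lemma map_lead (P : {poly A}) : y (lead_coef P) != 0 -> size (map_poly y P) = size P.
Proof.
exact: size_map_poly_id0.
Qed.

End PT.

Lemma extend j y c : ptj j y ->
  (forall Q, Q \is a polyOver (inBb j) -> Q.[G j] = 0 -> (map_poly y Q).[c] = 0) ->
  exists y', ptj j.+1 y' /\
    forall Q, Q \is a polyOver (inBb j) -> y' Q.[G j] = (map_poly y Q).[c].
Proof.
move=> hy WD.
pose y' b := (map_poly y (pick_or 0 (fun Q => Q \is a polyOver (inBb j) /\ b = Q.[G j]))).[c].
have yQ : forall Q, Q \is a polyOver (inBb j) -> y' Q.[G j] = (map_poly y Q).[c].
  move=> Q hQ; rewrite /y'.
  have [hQ' e] := pick_orP 0 (ex_intro (fun Q' => Q' \is a polyOver (inBb j) /\ Q.[G j] = Q'.[G j]) Q (conj hQ erefl)).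
  move: hQ' e; set Q' := pick_or _ _ => hQ' e.
  apply/eqP; rewrite -subr_eq0 -hornerB -(mapB hy) //; apply/eqP; apply: WD; first exact: rpredB.
  by rewrite hornerB -e subrr.
exists y'; split => //.
have getQ : forall u, u \in inBb j.+1 -> exists2 Q, Q \is a polyOver (inBb j) & u = Q.[G j].
  by move=> u /inBbP /inBSP.
split; [|split].
- move=> c0; have -> : iota c0 = ((iota c0)%:P).[G j] by rewrite hornerC.
  by rewrite yQ ?polyOverC ?inBb_iota // (mapC hy) hornerC (pt_iota hy).
- move=> u v /getQ [Q1 h1 ->] /getQ [Q2 h2 ->].
  by rewrite -hornerD !yQ ?rpredD // (mapD hy) // hornerD.
- move=> u v /getQ [Q1 h1 ->] /getQ [Q2 h2 ->].
  by rewrite -hornerM !yQ ?rpredM // (mapM hy) // hornerM.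
Qed.

Lemma size_lt_coef (p : {poly A}) n : (0 < n)%N -> (size p <= n)%N -> p`_n.-1 = 0 -> (size p < n)%N.
Proof.
move=> n0 hle hc; rewrite ltn_neqAle hle andbT; apply/eqP => hs.
have : lead_coef p = 0 by rewrite lead_coefE hs.
move/eqP; rewrite lead_coef_eq0 => /eqP p0; move: hs; rewrite p0 size_poly0 => hn.
by rewrite -hn in n0.
Qed.

Lemma pdiv j (D Q : {poly A}) : D \is a polyOver (inBb j) -> D != 0 ->
  Q \is a polyOver (inBb j) ->
  exists e (Sq R : {poly A}), [/\ Sq \is a polyOver (inBb j), R \is a polyOver (inBb j),
    lead_coef D ^+ e *: Q = Sq * D + R & (size R < size D)%N].
Proof.
move=> hD D0.
have lD0 : lead_coef D != 0 by rewrite lead_coef_eq0.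
have lDS : lead_coef D \in inBb j by rewrite lead_coefE; apply/polyOverP.
elim: {Q}(size Q).+1 {-2}Q (ltnSn (size Q)) => // N IH Q hsz hQ.
have [lt|ge] := ltnP (size Q) (size D).
  by exists 0%N, 0, Q; split; rewrite ?rpred0 ?expr0 ?scale1r ?mul0r ?add0r.
have Q0 : Q != 0.
  by apply: contraTneq ge => ->; rewrite size_poly0 -ltnNge lt0n size_poly_eq0.
set m := (size Q - size D)%N.
set T := (lead_coef Q *: 'X^m) * D.
have lQ0 : lead_coef Q != 0 by rewrite lead_coef_eq0.
have lQS : lead_coef Q \in inBb j by rewrite lead_coefE; apply/polyOverP.
have hT : T \is a polyOver (inBb j) by rewrite rpredM // polyOverZ // polyOverXn.
have szT : size T = size Q.
  rewrite /T size_mul //; last by rewrite scale_poly_eq0 negb_or lQ0 -size_poly_eq0 size_polyXn.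
  by rewrite size_scale // size_polyXn /m addSn /= subnK.
have lT : lead_coef T = lead_coef Q * lead_coef D.
  by rewrite /T lead_coefM lead_coefZ lead_coefXn mulr1.
set Q' := lead_coef D *: Q - T.
have hQ' : Q' \is a polyOver (inBb j) by rewrite rpredB // polyOverZ.
have szQ0 : (0 < size Q)%N by rewrite lt0n size_poly_eq0.
have szQ' : (size Q' < size Q)%N.
  apply: size_lt_coef => //.
    rewrite /Q' (leq_trans (size_polyD _ _)) // size_polyN szT size_scale // maxnn //.
  rewrite /Q' coefB coefZ -lead_coefE -szT -lead_coefE lT mulrC subrr //.
have [e [Sq [R [hSq hR eq szR]]]] := IH Q' (leq_trans szQ' (ltnSE hsz)) hQ'.
exists e.+1, (Sq + (lead_coef D ^+ e * lead_coef Q) *: 'X^m), R; split => //.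
  by apply: rpredD => //; apply: polyOverZ; [rewrite rpredM ?rpredX | apply: polyOverXn].
rewrite exprSr -scalerA (_ : lead_coef D *: Q = Q' + T); last by rewrite /Q' subrK.
by rewrite scalerDr eq mulrDl /T -!scalerAl scalerA addrAC.
Qed.

Lemma NSj j : forall f, inB j f -> f != 0 -> exists y, ptj j y /\ y f != 0.
Proof.
elim: j => [|j IH] f.
  case=> c -> ic0.
  pose y b := pick_or 0 (fun c => b = iota c).
  have yi : forall c, y (iota c) = c.
    move=> c0; have := pick_orP 0 (ex_intro (fun c' => iota c0 = iota c') c0 erefl).
    by rewrite -/(y _) => /fmorph_inj.
  exists y; split; last by rewrite yi; apply: contraNneq ic0 => ->; rewrite rmorph0.
  split => //; split.
    by move=> u v /inBbP [c1 ->] /inBbP [c2 ->]; rewrite -rmorphD !yi.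
  by move=> u v /inBbP [c1 ->] /inBbP [c2 ->]; rewrite -rmorphM !yi.
move=> /inBSP [F hF ->] f0.
set a := G j.
have [[P1 [hP1 [P10 P1a]]]|hT] := classic (exists P, [/\ P \is a polyOver (inBb j), P != 0 & P.[a] = 0]).
  have [sP [[P [hP P0 Pa sPe]] minP]] := ex_min_nat (ex_intro (fun s => exists P, [/\ P \is a polyOver (inBb j), P != 0, P.[a] = 0 & size P = s]) _ (ex_intro _ P1 (And4 hP1 P10 P1a erefl))).
  have minP' : forall Q, Q \is a polyOver (inBb j) -> Q != 0 -> Q.[a] = 0 -> (size P <= size Q)%N.
    by move=> Q hQ Q0 Qa; rewrite sPe; apply: minP; exists Q.
  clear minP sPe P1 hP1 P10 P1a.
  have lS : lead_coef P \in inBb j by rewrite lead_coefE; apply/polyOverP.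
  have l0 : lead_coef P != 0 by rewrite lead_coef_eq0.
  have eP0 : P = 0 * F + 1 * P by rewrite mul0r add0r mul1r.
  have [sD [[U [V [D [hU hV eD D0 sDe]]]] minD]] := ex_min_nat (ex_intro (fun s => exists U V D, [/\ U \is a polyOver (inBb j), V \is a polyOver (inBb j), D = U * F + V * P, D != 0 & size D = s]) _ (ex_intro _ 0 (ex_intro _ 1 (ex_intro _ P (And5 (rpred0 _) (rpred1 _) eP0 P0 erefl))))).
  have minD' : forall U' V', U' \is a polyOver (inBb j) -> V' \is a polyOver (inBb j) ->
      U' * F + V' * P != 0 -> (size D <= size (U' * F + V' * P)%R)%N.
    by move=> U' V' hU' hV' h; rewrite sDe; apply: (minD (size (U' * F + V' * P))); exists U', V', (U' * F + V' * P); split.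
  clear minD sDe.
  have hD : D \is a polyOver (inBb j) by rewrite eD rpredD ?rpredM.
  have lDS : lead_coef D \in inBb j by rewrite lead_coefE; apply/polyOverP.
  have lD0 : lead_coef D != 0 by rewrite lead_coef_eq0.
  have [e1 [Sq1 [R1 [hSq1 hR1 eq1 sR1]]]] := pdiv hD D0 hP.
  have R10 : R1 = 0.
    apply/eqP; apply: contraTT sR1 => R10; rewrite -leqNgt.
    have eR : R1 = (- (Sq1 * U)) * F + ((lead_coef D ^+ e1)%:P - Sq1 * V) * P.
      have -> : R1 = lead_coef D ^+ e1 *: P - Sq1 * D by rewrite eq1 addrC addKr.
      by rewrite -mul_polyC eD; ring.
    rewrite eR in R10 *; apply: minD' => //; rewrite ?rpredN ?rpredB ?rpredM ?polyOverC ?rpredX //.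
  have [e2 [Sq2 [R2 [hSq2 hR2 eq2 sR2]]]] := pdiv hD D0 hF.
  have R20 : R2 = 0.
    apply/eqP; apply: contraTT sR2 => R20; rewrite -leqNgt.
    have eR : R2 = ((lead_coef D ^+ e2)%:P - Sq2 * U) * F + (- (Sq2 * V)) * P.
      have -> : R2 = lead_coef D ^+ e2 *: F - Sq2 * D by rewrite eq2 addrC addKr.
      by rewrite -mul_polyC eD; ring.
    rewrite eR in R20 *; apply: minD' => //; rewrite ?rpredN ?rpredB ?rpredM ?polyOverC ?rpredX //.
  have eq1' : lead_coef D ^+ e1 *: P = Sq1 * D by rewrite eq1 R10 addr0.
  have eq2' : lead_coef D ^+ e2 *: F = Sq2 * D by rewrite eq2 R20 addr0.
  have Da : D.[a] != 0.
    apply: contra f0 => /eqP Da0; have := congr1 (horner^~ a) eq2'.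
    rewrite /= hornerZ hornerM Da0 mulr0 => /eqP; rewrite mulf_eq0 expf_eq0 (negbTE lD0) andbF /=.
    by [].
  have Sq10 : Sq1 != 0.
    apply: contraNneq P0 => Sq0; move: eq1'; rewrite Sq0 mul0r => /eqP.
    by rewrite scale_poly_eq0 expf_eq0 (negbTE lD0) andbF.
  have Sq1a : Sq1.[a] = 0.
    have := congr1 (horner^~ a) eq1'; rewrite /= hornerZ hornerM Pa mulr0 => /esym/eqP.
    by rewrite mulf_eq0 (negbTE Da) orbF => /eqP.
  have le1 := minP' Sq1 hSq1 Sq10 Sq1a.
  have szeq : size P = (size Sq1 + size D).-1.
    by rewrite -size_mul // -eq1' size_scale // expf_neq0.
  have sD1 : size D = 1%N.
    have : (0 < size D)%N by rewrite lt0n size_poly_eq0.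
    have : (0 < size Sq1)%N by rewrite lt0n size_poly_eq0.
    move: le1; rewrite szeq -subn1 leq_subLR [(1 + _)%N]addnC leq_add2l => h1 h2 h3.
    by apply/eqP; rewrite eqn_leq h1.
  have [r r0 Dr] := size_poly1P _ (introT eqP sD1).
  have rS : r \in inBb j by have := polyOverP hD 0; rewrite Dr coefC.
  have lr0 : lead_coef P * r != 0 by rewrite mulf_neq0.
  have [y [hy ylr]] := IH _ (elimT (inBbP _ _) (rpredM lS rS)) lr0.
  rewrite (ptM hy) // mulf_eq0 negb_or in ylr; case/andP: ylr => yl0 yr0.
  have szmP : size (map_poly y P) != 1%N.
    rewrite map_lead //; apply/eqP => sP1.
    have [c0 c00 Pc] := size_poly1P _ (introT eqP sP1).
    by move: Pa; rewrite Pc hornerC => /eqP; rewrite (negbTE c00).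
  have [c hc] := closed_rootP _ szmP.
  have WD : forall Q, Q \is a polyOver (inBb j) -> Q.[a] = 0 -> (map_poly y Q).[c] = 0.
    move=> Q hQ Qa.
    have [e [Sq [R [hSq hR eq sR]]]] := pdiv hP P0 hQ.
    have R0 : R = 0.
      apply/eqP; apply: contraTT sR => R0; rewrite -leqNgt; apply: minP' => //.
      have -> : R = lead_coef P ^+ e *: Q - Sq * P by rewrite eq addrC addKr.
      by rewrite hornerB hornerZ hornerM Qa Pa !mulr0 subrr.
    have := congr1 (fun Z => (map_poly y Z).[c]) eq.
    rewrite /= R0 addr0 -mul_polyC !(mapM hy) ?polyOverC ?rpredX // (mapC hy) (ptX hy) //.
    rewrite !hornerM hornerC (eqP hc) mulr0 => /eqP; rewrite mulf_eq0 expf_eq0 (negbTE yl0) andbF /=.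
    by move/eqP.
  have [y' [hy' yQ]] := extend hy WD.
  exists y'; split => //; rewrite yQ //.
  apply: contra yr0 => /eqP mFc.
  have := congr1 (fun Z => (map_poly y Z).[c]) eD.
  rewrite /= Dr (mapC hy) hornerC (mapD hy) ?rpredM // !(mapM hy) // hornerD !hornerM mFc (eqP hc).
  by rewrite !mulr0 addr0 => ->.
have F0 : F != 0 by apply: contraNneq f0 => ->; rewrite horner0.
have bS : lead_coef F \in inBb j by rewrite lead_coefE; apply/polyOverP.
have b0 : lead_coef F != 0 by rewrite lead_coef_eq0.
have [y [hy yb]] := IH _ (elimT (inBbP _ _) bS) b0.
have mF0 : map_poly y F != 0 by rewrite -size_poly_eq0 map_lead // size_poly_eq0.
have [c /= hc] := closed_nonrootP _ mF0.
have WD : forall Q, Q \is a polyOver (inBb j) -> Q.[a] = 0 -> (map_poly y Q).[c] = 0.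
  move=> Q hQ hQa; have [->|Q0] := eqVneq Q 0; first by rewrite map_poly0 horner0.
  by exfalso; apply: hT; exists Q.
have [y' [hy' yQ]] := extend hy WD.
by exists y'; split => //; rewrite yQ.
Qed.
End NS.

Lemma inB_monoN (k : closedFieldType) (A : idomainType) (iota : {rmorphism k -> A}) (G : nat -> A) j j' a :
  (j <= j')%N -> inB iota G j a -> inB iota G j' a.
Proof.
move=> le; elim: j' le => [|j' IH]; first by rewrite leqn0 => /eqP ->.
rewrite leq_eqVlt => /orP [/eqP -> //|lt] h.
by apply: inB_mono; apply: IH.
Qed.

Section MkRM.
Variables (A : idomainType) (k : fieldType) (y : A -> k).
Hypotheses (h0 : y 0 = 0) (hD : {morph y : a b / a + b}) (hM : {morph y : a b / a * b}) (h1 : y 1 = 1).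
Definition yfun := y.
HB.instance Definition _ := GRing.isNmodMorphism.Build A k yfun (h0, hD).
HB.instance Definition _ := GRing.isMonoidMorphism.Build A k yfun (h1, hM).
Definition yrm : {rmorphism A -> k} := yfun.
Lemma yrmE a : yrm a = y a. Proof. by []. Qed.
End MkRM.

Lemma nullst (k : closedFieldType) (A : idomainType) (iota : {rmorphism k -> A}) :
  fin_gen_alg iota -> forall f : A, f != 0 ->
  exists x : {rmorphism A -> k}, is_point iota x /\ x f != 0.
Proof.
case=> m [g hg] f f0.
pose G n := if insub n is Some i then g i else 0.
have allB : forall a, a \in inBb iota G m.
  apply: hg.
  - by move=> c; apply: inBb_iota.
  - move=> i; apply/inBbP; apply: (@inB_monoN _ _ _ _ i.+1) => //.
    have -> : g i = G i by rewrite /G valK.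
    exact: inB_gen.
  - by move=> a b ha hb; rewrite rpredD.
  - by move=> a b ha hb; rewrite rpredM.
have [y [hy yf]] := NSj (elimT (inBbP _ _ _ _) (allB f)) f0.
have h0 := pt0 hy.
have h1 : y 1 = 1 by rewrite -(rmorph1 iota) (pt_iota hy).
have hD : {morph y : a b / a + b} by move=> a b; apply: (ptD hy).
have hM : {morph y : a b / a * b} by move=> a b; apply: (ptM hy).
exists (yrm h0 hD hM h1); split => //.
by move=> c; rewrite yrmE (pt_iota hy).
Qed.

Section UFD.
Variables (A : idomainType) (hfact : factorial_ring A).

Definition fact_of (a : A) (s : seq A) :=
  (forall p, p \in s -> irreducible_elt p) /\ associated a (\prod_(p <- s) p).

Definition coprimeL n (p0 : A) (p : 'I_n -> A) :=
  forall c : A, rdvd c p0 -> (forall i, rdvd c (p i)) -> c \is a GRing.unit.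

Lemma assoc_sym (a b : A) : associated a b -> associated b a.
Proof.
case=> u [uU ->]; exists u^-1; split; first by rewrite unitrV.
by rewrite mulKr.
Qed.

Lemma assoc_trans (a b c : A) : associated a b -> associated b c -> associated a c.
Proof.
case=> u [uU ->] [v [vU ->]]; exists (u * v); split; first by rewrite unitrM uU.
by rewrite mulrA.
Qed.

Lemma fact_ex (a : A) : a != 0 -> exists s, fact_of a s.
Proof.
move=> a0; case: (boolP (a \is a GRing.unit)) => aU.
  exists [::]; split => //; exists a; split => //; by rewrite big_nil mulr1.
have [s [hs es]] := hfact.1 a a0 aU.
exists s; split => //; exists 1; split; by rewrite ?unitr1 ?mul1r.
Qed.

Lemma fact_size (a : A) s t : fact_of a s -> fact_of a t -> size s = size t.
Proof.
case=> hs es [ht et].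
have [t' [pe [sz _]]] := hfact.2 s t hs ht (assoc_trans (assoc_sym es) et).
by rewrite -sz (perm_size pe).
Qed.

Lemma fact_mul (a b : A) s t : fact_of a s -> fact_of b t -> fact_of (a * b) (s ++ t).
Proof.
case=> hs [u [uU ->]] [ht [v [vU ->]]]; split.
  by move=> p; rewrite mem_cat => /orP [] ?; [apply: hs | apply: ht].
exists (u * v); split; first by rewrite unitrM uU.
by rewrite big_cat /=; ring.
Qed.

Lemma fact_irr (p : A) : irreducible_elt p -> fact_of p [:: p].
Proof.
move=> hp; split; first by move=> q; rewrite inE => /eqP ->.
by exists 1; split; rewrite ?unitr1 // big_cons big_nil mulr1 mul1r.
Qed.

Definition len (a : A) := size (pick_or [::] (fact_of a)).

Lemma len_spec (a : A) s : a != 0 -> fact_of a s -> len a = size s.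
Proof.
move=> a0 hs; apply: fact_size hs; apply: pick_orP; exact: fact_ex.
Qed.

Lemma len_mul (a b : A) : a != 0 -> b != 0 -> len (a * b) = (len a + len b)%N.
Proof.
move=> a0 b0; have [s hs] := fact_ex a0; have [t ht] := fact_ex b0.
rewrite (len_spec a0 hs) (len_spec b0 ht) (len_spec (mulf_neq0 a0 b0) (fact_mul hs ht)).
by rewrite size_cat.
Qed.

Lemma len_unit (a : A) : a != 0 -> (len a == 0)%N = (a \is a GRing.unit).
Proof.
move=> a0; case: (boolP (a \is a GRing.unit)) => aU.
  rewrite (@len_spec a [::]) //; split => //; exists a; split => //.
  by rewrite big_nil mulr1.
apply/negbTE; apply: contra aU; rewrite /len.
have hs := pick_orP [::] (fact_ex a0); move: hs.
set s := pick_or [::] (fact_of a) => hs /eqP /size0nil s0.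
by rewrite s0 in hs; case: hs => _ [u [uU ->]]; rewrite big_nil mulr1.
Qed.

Lemma dvd_prod (s : seq A) e : e \in s -> rdvd e (\prod_(p <- s) p).
Proof. by move=> es; exists (\prod_(p <- rem e s) p); rewrite (big_rem e es). Qed.

Lemma irr_dvd (pi a b : A) : irreducible_elt pi -> rdvd pi (a * b) -> rdvd pi a \/ rdvd pi b.
Proof.
move=> hpi [c ec].
have [->|a0] := eqVneq a 0; first by left; exists 0; rewrite mulr0.
have [->|b0] := eqVneq b 0; first by right; exists 0; rewrite mulr0.
have c0 : c != 0 by apply: contraTneq (mulf_neq0 a0 b0) => c0; rewrite ec c0 mulr0 eqxx.
have [s hs] := fact_ex a0; have [t ht] := fact_ex b0; have [u hu] := fact_ex c0.
have h1 := fact_mul hs ht.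
have h2 : fact_of (a * b) (pi :: u) by rewrite ec; apply: (fact_mul (fact_irr hpi) hu).
have [t' [pe [sz hi]]] := hfact.2 (pi :: u) (s ++ t) h2.1 h1.1 (assoc_trans (assoc_sym h2.2) h1.2).
have [v [vU /= pie]] := hi 0%N isT.
have et' : nth 0 t' 0 \in s ++ t by rewrite (perm_mem pe) mem_nth // sz.
set e := nth 0 t' 0 in pie et'.
rewrite mem_cat in et'; case/orP: et' => hes; [left; case: hs => _ [w [wU ->]] | right; case: ht => _ [w [wU ->]]];
  have [z ez] := dvd_prod hes; exists (v^-1 * w * z); rewrite ez pie -[LHS]mul1r -(mulrV vU); ring.
Qed.

Lemma exists_irr (a : A) : a != 0 -> a \isn't a GRing.unit ->
  exists pi, irreducible_elt pi /\ rdvd pi a.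
Proof.
move=> a0 aU; have [s [hs es]] := hfact.1 a a0 aU.
case: s hs es => [|pi s] hs es; first by move: aU; rewrite es big_nil unitr1.
exists pi; split; first by apply: hs; rewrite inE eqxx.
by exists (\prod_(p <- s) p); rewrite es big_cons.
Qed.

Lemma gcd_redN n N : forall (D : A) (q : 'I_n -> A), (len D < N)%N -> D != 0 ->
  exists G p0 (p : 'I_n -> A), [/\ D = G * p0, forall i, q i = G * p i & coprimeL p0 p].
Proof.
elim: N => // N IH D q hlen D0.
have [[c [cD cq cU]]|nc] := classic (exists c, [/\ rdvd c D, forall i, rdvd c (q i) & c \isn't a GRing.unit]); last first.
  exists 1, D, q; split => [|i|]; rewrite ?mul1r //.
  move=> c cD cq; case: (boolP (c \is a GRing.unit)) => // cU.
  by exfalso; apply: nc; exists c.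
case: cD => D' eD.
pose q' i := pick_or 0 (fun z => q i = c * z).
have eq' : forall i, q i = c * q' i by move=> i; exact: (pick_orP 0 (cq i)).
have c0 : c != 0 by apply: contraNneq D0 => c0; rewrite eD c0 mul0r.
have D'0 : D' != 0 by apply: contraNneq D0 => d0; rewrite eD d0 mulr0.
have lt : (len D' < N)%N.
  move: hlen; rewrite eD len_mul //.
  have : (len c != 0)%N by rewrite len_unit.
  by case: (len c) => // l _; rewrite addSn ltnS; apply: leq_trans; rewrite ltnS leq_addl.
have [G' [p0 [p [e1 e2 e3]]]] := IH D' q' lt D'0.
exists (c * G'), p0, p; split => //; first by rewrite eD e1 mulrA.
by move=> i; rewrite eq' e2 mulrA.
Qed.

Lemma dvd_lemmaN n (p : 'I_n -> A) N : forall (p0 : A), (len p0 < N)%N -> p0 != 0 -> coprimeL p0 p ->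
  forall (h0 : A) (h : 'I_n -> A), (forall i, h0 * p i = p0 * h i) -> rdvd p0 h0.
Proof.
elim: N => // N IH p0 hlen p00 cop h0 h eh.
case: (boolP (p0 \is a GRing.unit)) => p0U.
  by exists (p0^-1 * h0); rewrite mulVKr.
have [pi [hpi [r er]]] := exists_irr p00 p0U.
have [[i0 ni0]|nd] := classic (exists i, ~ rdvd pi (p i)); last first.
  exfalso; case: hpi => _ [piU _]; move/negP: piU; apply; apply: cop.
    by exists r.
  by move=> i; case: (classic (rdvd pi (p i))) => // hn; exfalso; apply: nd; exists i.
have pi0 : pi != 0 by case: hpi.
have : rdvd pi (h0 * p i0) by rewrite eh er; exists (r * h i0); rewrite mulrA.
case/(irr_dvd hpi) => // [[h0' eh0]].
have r0 : r != 0 by apply: contraNneq p00 => r0; rewrite er r0 mulr0.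
have eh' : forall i, h0' * p i = r * h i.
  by move=> i; apply: (mulfI pi0); rewrite mulrA -eh0 eh er mulrA.
have cop' : coprimeL r p.
  by move=> c [z ez] cp; apply: cop => //; exists (pi * z); rewrite er ez; ring.
have lt : (len r < N)%N.
  move: hlen; rewrite er len_mul //.
  have : (len pi != 0)%N by rewrite len_unit //; case: hpi => _ [].
  by case: (len pi) => // l _; rewrite addSn ltnS; apply: leq_trans; rewrite ltnS leq_addl.
have [w ew] := IH r lt r0 cop' h0' h eh'.
by exists w; rewrite eh0 ew er mulrA.
Qed.

Lemma gcd_red n (q : 'I_n -> A) (D : A) : D != 0 ->
  exists G p0 (p : 'I_n -> A), [/\ D = G * p0, forall i, q i = G * p i & coprimeL p0 p].
Proof. exact: (@gcd_redN n (len D).+1 D q (ltnSn _)). Qed.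

Lemma dvd_lemma n (p : 'I_n -> A) (p0 : A) : p0 != 0 -> coprimeL p0 p ->
  forall (h0 : A) (h : 'I_n -> A), (forall i, h0 * p i = p0 * h i) -> rdvd p0 h0.
Proof. exact: (@dvd_lemmaN n p (len p0).+1 p0 (ltnSn _)). Qed.

End UFD.

Lemma inj_good (K : fieldType) n d (Phi : 'M[K]_(n, d)) (N0 : 'M[K]_(d, n)) (u : 'rV_n) :
  \det (Phi *m N0) != 0 -> u *m Phi = 0 -> u = 0.
Proof.
move=> dt hu; have uM : Phi *m N0 \in unitmx by rewrite unitmxE unitfE.
by rewrite -(mulmxK uM u) mulmxA hu !mul0mx.
Qed.

Lemma good_point (K : fieldType) n d (Phi : 'M[K]_(n, d)) (psi : 'rV[K]_d) (N0 : 'M[K]_(d, n)) :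
  \det (Phi *m N0) != 0 -> ~~ row_free (col_mx Phi psi) ->
  \det (Phi *m N0) *: psi = (psi *m N0 *m \adj (Phi *m N0)) *m Phi.
Proof.
move=> dt nrf.
have [v [hv v0]] : exists v : 'rV_(n + 1), v *m col_mx Phi psi = 0 /\ v != 0.
  case: (classic (exists v : 'rV_(n + 1), v *m col_mx Phi psi = 0 /\ v != 0)) => // nex.
  exfalso; move/negP: nrf; apply; apply: inj_row_free => v hv.
  by apply/eqP; apply/negPn/negP => nz; apply: nex; exists v.
rewrite -(hsubmxK v) mul_row_col in hv.
set a := lsubmx v in hv; set b := rsubmx v in hv.
rewrite [b]mx11_scalar mul_scalar_mx in hv.
have b0 : b 0 0 != 0.
  apply: contraNneq v0 => b0; rewrite b0 scale0r addr0 in hv.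
  have a0 := inj_good dt hv.
  by rewrite -(hsubmxK v) -/a -/b a0 [b]mx11_scalar b0 raddf0 row_mx0.
have epsi : psi = (- (b 0 0)^-1) *: (a *m Phi).
  apply: (scalerI b0); rewrite scalerA mulrN mulfV // scaleN1r.
  by apply/eqP; rewrite -addr_eq0 addrC hv.
have e1 : psi *m N0 *m \adj (Phi *m N0) = (- (b 0 0)^-1 * \det (Phi *m N0)) *: a.
  rewrite {1}epsi -scalemxAl -scalemxAl -(mulmxA a Phi N0) -(mulmxA a (Phi *m N0)).
  by rewrite mul_mx_adj mul_mx_scalar scalerA.
by rewrite e1 -scalemxAl {1}epsi scalerA mulrC.
Qed.

Unset Implicit Arguments.

Theorem lemma3p3 (k : closedFieldType) (A : idomainType)
  (iota : {rmorphism k -> A})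
  (hfg : fin_gen_alg iota) (hfact : factorial_ring A)
  (d n : nat) (phi : 'I_n -> 'rV[A]_d) (psi : 'rV[A]_d)
  (hO : exists x : {rmorphism A -> k}, is_point iota x /\
          row_free (\matrix_(i < n) evalv x (phi i)))
  (hdep : forall x : {rmorphism A -> k}, is_point iota x ->
          ~~ row_free (col_mx (\matrix_(i < n) evalv x (phi i)) (evalv x psi))) :
  exists (p0 : A) (p : 'I_n -> A),
    (forall c : A, rdvd c p0 -> (forall i, rdvd c (p i)) -> c \is a GRing.unit) /\
    (forall x : {rmorphism A -> k}, is_point iota x ->
       x p0 *: evalv x psi = \sum_(i < n) x (p i) *: evalv x (phi i)) /\
    (forall (h0 : A) (h : 'I_n -> A),
       (forall x : {rmorphism A -> k}, is_point iota x ->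
          x h0 *: evalv x psi = \sum_(i < n) x (h i) *: evalv x (phi i))
       <-> exists g : A, h0 = g * p0 /\ forall i, h i = g * p i).
Proof.
set Phi := \matrix_(i < n) phi i.
have evPhi : forall x : {rmorphism A -> k}, \matrix_(i < n) evalv x (phi i) = map_mx x Phi.
  by move=> x; apply/matrixP => i j; rewrite !mxE.
have PhiE : forall i j, Phi i j = phi i 0 j by move=> i j; rewrite mxE.
have entryE : forall (x : {rmorphism A -> k}) (h0 : A) (h : 'I_n -> A),
    (x h0 *: evalv x psi = \sum_(i < n) x (h i) *: evalv x (phi i)) <->
    (forall j, x (h0 * psi 0 j) = x (\sum_(i < n) h i * Phi i j)).
  move=> x h0 h; split.
    move=> H j; move/rowP: H => /(_ j); rewrite !mxE summxE rmorphM rmorph_sum => ->.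
    by apply: eq_bigr => i _; rewrite !mxE rmorphM.
  move=> H; apply/rowP => j; rewrite !mxE summxE -rmorphM H rmorph_sum.
  by apply: eq_bigr => i _; rewrite !mxE rmorphM.
case: hO => x0 [px0 rf0]; rewrite evPhi in rf0.
have [N0 hN0] := row_freeP rf0.
set N := map_mx iota N0.
have xN : forall x : {rmorphism A -> k}, is_point iota x -> map_mx x N = N0.
  by move=> x px; apply/matrixP => i j; rewrite !mxE px.
set M := Phi *m N.
set D := \det M.
have xD : forall x : {rmorphism A -> k}, is_point iota x -> x D = \det (map_mx x Phi *m N0).
  by move=> x px; rewrite -det_map_mx map_mxM xN.
have D0 : D != 0.
  apply: contra_neq (oner_neq0 k) => D0.
  by rewrite -(det1 k n) -hN0 -xD // D0 rmorph0.
set q := psi *m N *m \adj M.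
have xq : forall x : {rmorphism A -> k}, is_point iota x ->
    map_mx x q = map_mx x psi *m N0 *m \adj (map_mx x Phi *m N0).
  by move=> x px; rewrite /q !map_mxM map_mx_adj map_mxM xN.
have EA : forall j, D * psi 0 j = \sum_(i < n) q 0 i * Phi i j.
  move=> j; apply/eqP; rewrite -subr_eq0; apply/eqP.
  set E := _ - _.
  apply: (mulfI D0); rewrite mulr0; apply/eqP; apply: contraT => nz.
  have [x [px xE]] := nullst hfg nz.
  move: xE; rewrite rmorphM mulf_eq0 negb_or => /andP [xD0 xE].
  suff xE0 : x E = 0 by rewrite xE0 eqxx in xE.
  have hd := hdep x px; rewrite evPhi in hd.
  rewrite xD // in xD0.
  have := good_point xD0 hd; rewrite -xq // -xD // => /rowP /(_ j).
  rewrite /E rmorphB rmorphM rmorph_sum !mxE => ->.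
  by rewrite rmorph_sum -sumrB big1 // => i _; rewrite !mxE rmorphM subrr.
have [G [p0 [p [eD eq cop]]]] := gcd_red hfact (fun i => q 0 i) D0.
have G0 : G != 0 by apply: contraNneq D0 => G0; rewrite eD G0 mul0r.
have p00 : p0 != 0 by apply: contraNneq D0 => p00; rewrite eD p00 mulr0.
have idp : forall j, p0 * psi 0 j = \sum_(i < n) p i * Phi i j.
  move=> j; apply: (mulfI G0); rewrite mulrA -eD EA mulr_sumr.
  by apply: eq_bigr => i _; rewrite eq mulrA.
have ptp : forall x : {rmorphism A -> k}, is_point iota x ->
    x p0 *: evalv x psi = \sum_(i < n) x (p i) *: evalv x (phi i).
  by move=> x px; apply/entryE => j; rewrite idp.
exists p0, p; split => //; split => //.
move=> h0 h; split; last first.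
  case=> g [-> eh] x px; apply/entryE => j; rewrite -mulrA idp mulr_sumr.
  by congr (x _); apply: eq_bigr => i _; rewrite eh mulrA.
move=> H.
have key : forall i, h0 * p i = p0 * h i.
  move=> i; apply/eqP; rewrite -subr_eq0; apply/eqP.
  apply: (mulfI D0); rewrite mulr0; apply/eqP; apply: contraT => nz.
  have [x [px xE]] := nullst hfg nz.
  move: xE; rewrite rmorphM mulf_eq0 negb_or => /andP [xD0 xE].
  suff e : x (h0 * p i - p0 * h i) = 0 by rewrite e eqxx in xE.
  rewrite xD // in xD0.
  set u := \row_l (x (h0 * p l - p0 * h l)).
  have : u *m map_mx x Phi = 0.
    apply/rowP => j; rewrite !mxE.
    have e1 := (entryE x p0 p).1 (ptp x px) j.
    have e2 := (entryE x h0 h).1 (H x px) j.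
    transitivity (x h0 * x (p0 * psi 0 j) - x p0 * x (h0 * psi 0 j)).
      rewrite e1 e2 !rmorph_sum !mulr_sumr -sumrB; apply: eq_bigr => l _.
      by rewrite !mxE !rmorphB !rmorphM; ring.
    by rewrite !rmorphM; ring.
  by move/(inj_good xD0) => /rowP /(_ i); rewrite !mxE.
have [g eg] := dvd_lemma hfact p00 cop key.
exists g; split; first by rewrite eg mulrC.
by move=> i; apply: (mulfI p00); rewrite -key eg mulrA.
Qed.
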